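(* Let $n\ge4$. The fan $F_{2,n}$ in $\mathbb R^{n-3}$ is equal to the Stanley–Pitman fan $F_{n-3}$ in $\mathbb R^{n-3}$ (they have the same cones).
   Context: $\mathrm{Web}_{k,n}$: grid vertices $v_{a,c}$, $a\in[k]$ (rows top to bottom), $c\in[n-k]$ (columns right to left); sources $s_a$ right of row $a$ labelled $a$; sinks $t_c$ below column $c$ labelled $k+c$; edges $s_a\to v_{a,1}$, $v_{a,c}\to v_{a,c+1}$, $v_{a,c}\to v_{a+1,c}$, $v_{k,c}\to t_c$. Regions $r_{a,c}$ ($a\in[k]$, $c\in[n-k]$): the face just below row $a$ (below row $k$ if $a=k$) and just right of column $c$ (between column 1 and the right boundary if $c=1$); inner regions are those with $a<k$ and $c\ge2$, the others are outer. A path $p$ from $s_i$ moves left along row $i$ to column $c_i$, down, left to $c_{i+1}$, \dots, down from $v_{k,c_k}$ to $t_{c_k}$ ($c_i\le\dots\le c_k$). Given real values $x_r$ on the inner regions (outer regions assigned the value $0$), $\mathrm{Sum}_p(x)=\sum_{a=i}^k\sum_{c=1}^{c_a}x_{r_{a,c}}$. For $K\in\binom{[n]}{k}$, $\mathrm{Path}(K)$ is the set of families of pairwise vertex-disjoint paths from the sources labelled by $[k]\setminus K$ to the sinks labelled by $K\setminus[k]$, and $\operatorname{Trop}P_K(x)=\min_{S\in\mathrm{Path}(K)}\sum_{p\in S}\mathrm{Sum}_p(x)$ (values assigned to outer regions would only add a constant to each $\operatorname{Trop}P_K$). $F_{k,n}$ is the complete fan in $\mathbb R^{(k-1)(n-k-1)}$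 whose maximal cones are the domains of linearity of the piecewise linear map $x\mapsto(\operatorname{Trop}P_K(x))_{K}$, i.e. the common refinement of the fans of domains of linearity of the functions $\operatorname{Trop}P_K$. For $k=2$ the inner regions are $r_{1,c}$, $c=2,\dots,n-2$, and we use coordinates $x_m=x_{r_{1,m+1}}$, $m=1,\dots,n-3$ (inner regions labelled right to left). Stanley–Pitman fan $F_{n-3}$: a plane binary tree is a rooted tree in which every vertex has either no children or exactly two, designated left and right; internal vertices are non-leaves. For a plane binary tree $T$ with $n-1$ leaves, label its $n-2$ internal vertices $1,\dots,n-2$ in in-order (symmetric order: left subtree, then the vertex, then right subtree). For each pair of internal vertices with $i$ the parent of $j$, impose $x_i+\dots+x_{j-1}\ge0$ if $i<j$, and $x_j+\dots+x_{i-1}\le0$ if $i>j$. These $n-3$ inequalities define a cone $C_T\subset\mathbb R^{n-3}$, and $F_{n-3}$ is the fan whose maximal cones are the $C_T$ over all such trees $T$. *)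

(* Defs.v *)
From HB Require Import structures.
From mathcomp Require Import all_boot all_order all_algebra.
From mathcomp Require Import classical_sets reals.
Set Implicit Arguments. Unset Strict Implicit. Unset Printing Implicit Defensive.
Import Order.TTheory GRing.Theory Num.Theory.
Local Open Scope ring_scope.
Local Open Scope classical_set_scope.

(* Web_{k,n}.  All row / column / label indices are 1-based naturals, as in   *)
(* the paper.  A path is encoded as (i, [:: c_i; ...; c_k]) : nat * seq nat:  *)
(* it starts at the source s_i, moves left along row i to column c_i, down,   *)
(* left to c_{i+1}, ..., down from v_{k,c_k} to the sink t_{c_k}.             *)

Definition wpath := (nat * seq nat)%type.

Definition pcol (p : wpath) (a : nat) : nat := nth 0%N p.2 (a - p.1).

Definition pend (p : wpath) : nat := last 0%N p.2.

Definition path_ok (k n : nat) (p : wpath) : bool :=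
  [&& (1 <= p.1 <= k)%N, size p.2 == (k - p.1).+1, sorted leq p.2
    & all (fun c => 1 <= c <= n - k)%N p.2].

(* the grid vertex v_{a,c} lies on p (sources and sinks are distinct for
   distinct starting rows / ending columns, which are required separately) *)
Definition on_path (k : nat) (p : wpath) (a c : nat) : bool :=
  [&& (p.1 <= a <= k)%N,
      ((if a == p.1 then 1 else pcol p a.-1) <= c)%N & (c <= pcol p a)%N].

Definition lab_in (n : nat) (K : {set 'I_n}) (l : nat) : bool :=
  [exists i : 'I_n, (i \in K) && (i.+1 == l)].

(* S is an element of Path(K): a family of pairwise vertex-disjoint paths from
   the sources labelled by [k]\K to the sinks labelled by K\[k]
   (sink t_c has label k+c). *)
Definition family_ok (k n : nat) (K : {set 'I_n}) (S : seq wpath) : Prop :=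
  [/\ all (path_ok k n) S,
      uniq (map fst S) /\ uniq (map pend S),
      (forall a, a \in map fst S <-> ((1 <= a <= k)%N /\ ~~ lab_in K a)),
      (forall c, c \in map pend S <-> ((1 <= c <= n - k)%N /\ lab_in K (k + c)))
    & (forall i j, (i < j < size S)%N -> forall a c,
          ~~ (on_path k (nth (0%N, [::]) S i) a c && on_path k (nth (0%N, [::]) S j) a c))].

Arguments family_ok : clear implicits.

(* values on regions: xr a c is the value of r_{a,c}; outer regions get 0 *)
Definition regval (R : realType) (k : nat) (xr : nat -> nat -> R) (a c : nat) : R :=
  if (a < k)%N && (2 <= c)%N then xr a c else 0.

Definition psum (R : realType) (k : nat) (xr : nat -> nat -> R) (p : wpath) : R :=
  \sum_(p.1 <= a < k.+1) \sum_(1 <= c < (pcol p a).+1) regval k xr a c.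

Definition fweight (R : realType) (k : nat) (xr : nat -> nat -> R) (S : seq wpath) : R :=
  \sum_(p <- S) psum k xr p.

Definition full_dim (R : realType) (D : nat) (C : set ('I_D -> R)) : Prop :=
  exists x : 'I_D -> R, exists e : R, 0 < e /\
    forall y : 'I_D -> R, (forall i, `|y i - x i| < e) -> C y.

(* Maximal cones of F_{k,n}, the common refinement of the fans of domains of
   linearity of the Trop P_K.  Points of R^D are mapped to region values by
   [emb]. *)
Definition F_maxcone (R : realType) (k n D : nat)
    (emb : ('I_D -> R) -> nat -> nat -> R) (C : set ('I_D -> R)) : Prop :=
  full_dim C /\
  exists sel : {set 'I_n} -> seq wpath,
    (forall K : {set 'I_n}, #|K| = k -> family_ok k n K (sel K)) /\
    C = [set x | forall K : {set 'I_n}, #|K| = k ->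
                   forall S, family_ok k n K S ->
                     fweight k (emb x) (sel K) <= fweight k (emb x) S].

(* 1-based coordinate x_m of x in R^D (0 outside 1..D) *)
Definition xc (R : realType) (D : nat) (x : 'I_D -> R) (m : nat) : R :=
  if m is m'.+1 then
    (if insub m' is Some i then x (i : 'I_D) else 0) else 0.

(* k = 2: coordinates x_m = x_{r_{1,m+1}}, m = 1..n-3 *)
Definition emb2 (R : realType) (n : nat) (x : 'I_(n - 3) -> R) (a c : nat) : R :=
  if (a == 1%N) && (2 <= c)%N then xc x c.-1 else 0.

Inductive btree : Type := Leaf | Node of btree & btree.

Fixpoint nleaves (t : btree) : nat :=
  match t with Leaf => 1%N | Node l r => (nleaves l + nleaves r)%N end.

Fixpoint nint (t : btree) : nat :=
  match t with Leaf => 0%N | Node l r => (nint l + nint r).+1 end.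

(* in-order label of the root when the labels of t start at o+1 *)
Definition rootlab (t : btree) (o : nat) : option nat :=
  match t with Leaf => None | Node l _ => Some (o + nint l).+1 end.

(* all pairs (i, j) of internal vertices with i the parent of j,
   in-order labels starting at o+1 *)
Fixpoint pc_pairs (t : btree) (o : nat) : seq (nat * nat) :=
  match t with
  | Leaf => [::]
  | Node l r =>
      let i := (o + nint l).+1 in
      (if rootlab l o is Some j then [:: (i, j)] else [::]) ++
      (if rootlab r i is Some j then [:: (i, j)] else [::]) ++
      pc_pairs l o ++ pc_pairs r i
  end.

Definition SPcone (R : realType) (D : nat) (T : btree) : set ('I_D -> R) :=
  [set x | forall e, e \in pc_pairs T 0 ->
     if (e.1 < e.2)%N then 0 <= \sum_(e.1 <= m < e.2) xc x m
     else \sum_(e.2 <= m < e.1) xc x m <= 0].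

(* Main.v *)
Require Import Defs.
From HB Require Import structures.
From mathcomp Require Import all_boot all_order all_algebra.
From mathcomp Require Import classical_sets reals boolp.
From mathcomp Require Import zify ring lra.
Set Implicit Arguments. Unset Strict Implicit. Unset Printing Implicit Defensive.
Import Order.TTheory GRing.Theory Num.Theory.
Local Open Scope ring_scope.


Fixpoint sigm (t : btree) (o s u : nat) : nat :=
  match t with Leaf => 0%N | Node l r => let rho := (o + nint l)%N in
    if (u < rho)%N then sigm l o s u else if (rho < s)%N then sigm r rho.+1 s u else rho end.

Lemma nleavesE t : nleaves t = (nint t).+1.
Proof. elim: t => //= l IHl r IHr; rewrite IHl IHr; lia. Qed.

Lemma sig_in t o s u : (o <= s)%N -> (s <= u)%N -> (u < o + nint t)%N ->
  (s <= sigm t o s u <= u)%N.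
Proof.
elim: t o => [|l IHl r IHr] o /=; first lia.
move=> os su uo.
case: ifP => h1; first by apply: IHl => //; lia.
case: ifP => h2; first by apply: IHr => //; lia.
lia.
Qed.

Lemma sig_full l r o : sigm (Node l r) o o (o + nint (Node l r)).-1 = (o + nint l)%N.
Proof. rewrite /=; case: ifP => h1; first lia. case: ifP => h2; first lia. done. Qed.

Section TreeR.
Variable R : realType.

Lemma A_fwd (f : nat -> R) t o :
  (forall e, e \in pc_pairs t o -> f e.1.-1 <= f e.2.-1) ->
  forall s m u, (o <= s)%N -> (s <= m)%N -> (m <= u)%N -> (u < o + nint t)%N ->
  f (sigm t o s u) <= f m.
Proof.
elim: t o => [|l IHl r IHr] o H s m u os sm mu uo /=; first by move: uo => /=; lia.
have Hl : forall e, e \in pc_pairs l o -> f e.1.-1 <= f e.2.-1.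
  by move=> e he; apply: H => /=; rewrite !mem_cat he !orbT.
have Hr : forall e, e \in pc_pairs r (o + nint l).+1 -> f e.1.-1 <= f e.2.-1.
  by move=> e he; apply: H => /=; rewrite !mem_cat he !orbT.
have rootl : forall m', (o <= m')%N -> (m' < o + nint l)%N -> f (o + nint l)%N <= f m'.
  clear -H IHl Hl; move: H IHl Hl; case: l => [|ll lr] H IHl Hl m' om' m'o; first by rewrite /= in m'o; lia.
  have e1 : f (o + nint (Node ll lr))%N <= f (o + nint ll)%N.
    by have := H ((o + nint (Node ll lr)).+1, (o + nint ll).+1); apply; rewrite /= mem_head.
  apply: le_trans e1 _.
  have := IHl o Hl o m' (o + nint (Node ll lr)).-1 (leqnn _) om'.
  rewrite sig_full; apply; rewrite /= in m'o *; lia.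
have rootr : forall m', ((o + nint l).+1 <= m')%N -> (m' < (o + nint l).+1 + nint r)%N -> f (o + nint l)%N <= f m'.
  clear -H IHr Hr; move: H IHr Hr; case: r => [|rl rr] H IHr Hr m' om' m'o; first by rewrite /= in m'o; lia.
  have e1 : f (o + nint l)%N <= f ((o + nint l).+1 + nint rl)%N.
    have := H ((o + nint l).+1, ((o + nint l).+1 + nint rl).+1); rewrite /= !mem_cat.
    by case: (l) => [|ll lr] /=; rewrite mem_head ?orbT; apply.
  apply: le_trans e1 _.
  have := IHr (o + nint l).+1 Hr (o + nint l).+1 m' ((o + nint l).+1 + nint (Node rl rr)).-1 (leqnn _) om'.
  rewrite sig_full; apply; rewrite /= in m'o *; lia.
case: ifP => h1; first by apply: IHl => //; lia.
case: ifP => h2; first by apply: IHr => //; rewrite /= in uo; lia.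
case: (ltngtP m (o + nint l)) => [lt|gt|->]; last by [].
- by apply: rootl; lia.
- by apply: rootr; rewrite /= in uo; lia.
Qed.

Lemma A_bwd (rel : R -> R -> Prop) (f : nat -> R) t o :
  (forall s m u, (o <= s)%N -> (s <= m)%N -> (m <= u)%N -> (u < o + nint t)%N ->
     m != sigm t o s u -> rel (f (sigm t o s u)) (f m)) ->
  forall e, e \in pc_pairs t o -> rel (f e.1.-1) (f e.2.-1).
Proof.
elim: t o => [|l IHl r IHr] o H e //=.
rewrite !mem_cat => /or4P [].
- case: l IHl H => [|ll lr] //= IHl H; rewrite inE => /eqP -> /=.
  have := H (o + nint ll)%N (o + nint ll)%N (o + (nint ll + nint lr).+1)%N.
  rewrite /=; case: ifP => h1; first lia. case: ifP => h2; first lia.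
  by apply; lia.
- case: r IHr H => [|rl rr] //= IHr H; rewrite inE => /eqP -> /=.
  have := H (o + nint l)%N ((o + nint l).+1 + nint rl)%N ((o + nint l).+1 + nint rl)%N.
  rewrite /=; case: ifP => h1; first lia. case: ifP => h2; first lia.
  by apply; lia.
- apply: IHl => s m u os sm mu uo.
  have := H s m u os sm mu; rewrite /=; case: ifP => h1; last lia.
  by apply; lia.
- apply: IHr => s m u os sm mu uo.
  have := H s m u; rewrite /=; case: ifP => h1; first lia.
  case: ifP => h2; last lia.
  by apply; lia.
Qed.

Variable f : nat -> R.

Fixpoint am (s u : nat) : nat :=
  match u with 0%N => s | u'.+1 => if (u'.+1 <= s)%N then s else
    let a := am s u' in if f u'.+1 < f a then u'.+1 else a end.

Lemma am_in s u : (s <= u)%N -> (s <= am s u <= u)%N.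
Proof.
elim: u => [|u IH] /=; first lia.
move=> su; case: ifP => h; first lia.
have h' : (s <= u)%N by move/negbT: h; lia.
have := IH h'; case: ifP => _; lia.
Qed.

Lemma am_min s u m : (s <= m)%N -> (m <= u)%N -> f (am s u) <= f m.
Proof.
elim: u m => [|u IH] m /=; first by move=> h1 h2; have -> : m = s by lia.
move=> sm mu; case: ifP => h; first by have -> : m = s by lia.
case: (ltngtP m u.+1) => [lt|gt|->]; first last.
- by case: ifP => // /negbT; rewrite -leNgt.
- lia.
have IHm := IH m sm (ltnSE lt).
case: ifP => // hlt; apply: le_trans IHm; exact: ltW.
Qed.

Arguments am : simpl never.

Fixpoint bt (fuel s len : nat) : btree :=
  match fuel with 0%N => Leaf | fu.+1 => if len is 0%N then Leaf else
    let a := am s (s + len).-1 in Node (bt fu s (a - s)) (bt fu a.+1 ((s + len).-1 - a)) end.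

Lemma bt_nint fuel s len : (len <= fuel)%N -> nint (bt fuel s len) = len.
Proof.
elim: fuel s len => [|fu IH] s len /=; first by case: len.
case: len => [|len] // h /=.
have ha : (s <= am s (s + len.+1).-1 <= (s + len.+1).-1)%N by apply: am_in; lia.
rewrite !IH; lia.
Qed.

Lemma bt_min fuel s len : (len <= fuel)%N -> forall s' m u,
  (s <= s')%N -> (s' <= m)%N -> (m <= u)%N -> (u < s + len)%N ->
  f (sigm (bt fuel s len) s s' u) <= f m.
Proof.
elim: fuel s len => [|fu IH] s len /=; first by move=> h s' m u *; lia.
case: len => [|len] h s' m u ss' s'm mu us /=; first lia.
have ha : (s <= am s (s + len.+1).-1 <= (s + len.+1).-1)%N by apply: am_in; lia.
rewrite bt_nint; last lia.
have -> : (s + (am s (s + len.+1).-1 - s))%N = am s (s + len.+1).-1 by lia.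
case: ifP => h1; first by apply: IH => //; lia.
case: ifP => h2; first by apply: IH => //; lia.
apply: am_min; lia.
Qed.

End TreeR.

Fixpoint dep (t : btree) (o m : nat) : nat :=
  match t with Leaf => 0%N | Node l r => let rho := (o + nint l)%N in
    if (m < rho)%N then (dep l o m).+1 else if (rho < m)%N then (dep r rho.+1 m).+1 else 0%N end.

Lemma dep_strict t o s m u : (o <= s)%N -> (s <= m)%N -> (m <= u)%N -> (u < o + nint t)%N ->
  m != sigm t o s u -> (dep t o (sigm t o s u) < dep t o m)%N.
Proof.
elim: t o => [|l IHl r IHr] o os sm mu uo /=; first by move: uo => /=; lia.
move=> hne.
case h1: (u < o + nint l)%N; rewrite /= h1 /= in hne *.
  have hs := sig_in (t := l) os (leq_trans sm mu) h1.
  have -> : (sigm l o s u < o + nint l)%N by lia.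
  have -> : (m < o + nint l)%N by lia.
  rewrite ltnS; exact: IHl.
case h2: (o + nint l < s)%N; rewrite /= h2 /= in hne *.
  have uo' : (u < (o + nint l).+1 + nint r)%N by rewrite /= in uo; lia.
  have hs := sig_in (t := r) (o := (o + nint l).+1) (s := s) (u := u) h2 (leq_trans sm mu) uo'.
  have -> : (sigm r (o + nint l).+1 s u < o + nint l)%N = false by lia.
  have -> : (m < o + nint l)%N = false by lia.
  have -> : (o + nint l < sigm r (o + nint l).+1 s u)%N by lia.
  have -> : (o + nint l < m)%N by lia.
  rewrite ltnS; exact: IHr.
rewrite ltnn.
by case: (ltngtP m (o + nint l)) hne => // ->; rewrite eqxx.
Qed.


Lemma pairs_pos t o e : e \in pc_pairs t o -> (o < e.1)%N /\ (o < e.2)%N.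
Proof.
elim: t o => [|l IHl r IHr] o //.
rewrite [pc_pairs _ _]/= !mem_cat => /orP [|/orP [|/orP []]].
- by case: l {IHl} => // ll lr; rewrite /= inE => /eqP -> /=; lia.
- by case: r {IHr} => // rl rr; rewrite /= inE => /eqP -> /=; lia.
- by move/IHl; lia.
- by move/IHr; lia.
Qed.

Section PR.
Variable R : realType.
Variable D : nat.
Implicit Types x y : 'I_D -> R.

Definition Pf x (m : nat) : R := \sum_(i < m.+1) xc x i.

Lemma Pf0 x : Pf x 0 = 0.
Proof. by rewrite /Pf big_ord1. Qed.

Lemma PfS x m : Pf x m.+1 = Pf x m + xc x m.+1.
Proof. by rewrite /Pf big_ord_recr. Qed.

Lemma xcS x j (h : (j < D)%N) : xc x j.+1 = x (Ordinal h).
Proof. by rewrite /= insubT. Qed.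

Lemma xcS0 x j : (D <= j)%N -> xc x j.+1 = 0.
Proof. by move=> h; rewrite /= insubF // ltnNge h. Qed.

Lemma Pf_nat x k : (1 <= k)%N -> Pf x k.-1 = \sum_(0 <= m < k) xc x m.
Proof. by case: k => // k _; rewrite /Pf big_mkord. Qed.

Lemma sum_int x a b : (1 <= a)%N -> (a <= b)%N ->
  \sum_(a <= m < b) xc x m = Pf x b.-1 - Pf x a.-1.
Proof.
move=> ha hb; rewrite !Pf_nat //; last exact: leq_trans hb.
by rewrite (big_cat_nat (leq0n a) hb) /= addrC addrK.
Qed.

Definition Psi (f : nat -> R) : 'I_D -> R := fun j => f j.+1 - f j.

Lemma Pf_Psi f m : (m <= D)%N -> Pf (Psi f) m = f m - f 0%N.
Proof.
elim: m => [|m IH] h; first by rewrite Pf0 subrr.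
rewrite PfS IH; last lia.
rewrite (xcS _ h) /Psi /=; lra.
Qed.

Lemma Psi_Pf x : Psi (Pf x) = x.
Proof.
apply: funext => j; rewrite /Psi PfS addrC addKr (xcS _ (ltn_ord j)).
by congr x; apply: val_inj.
Qed.

Lemma Pf_ball x y e m : 0 <= e -> (forall j, `|y j - x j| < e) ->
  `|Pf y m - Pf x m| <= m%:R * e.
Proof.
move=> he hb; elim: m => [|m IH]; first by rewrite !Pf0 subrr normr0 mul0r.
rewrite !PfS.
have h2 : `|xc y m.+1 - xc x m.+1| <= e.
  case: (ltnP m D) => h; first by rewrite !(xcS _ h); exact: ltW.
  by rewrite !xcS0 // subrr normr0.
have -> : Pf y m + xc y m.+1 - (Pf x m + xc x m.+1) = (Pf y m - Pf x m) + (xc y m.+1 - xc x m.+1) by ring.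
apply: le_trans (ler_normD _ _) _.
rewrite -natr1 mulrDl mul1r; exact: lerD.
Qed.

End PR.


Section Fam.
Variable R : realType.
Variable n : nat.
Implicit Types x : 'I_(n - 3) -> R.

Lemma Gsum x k : \sum_(1 <= c < k.+1) (if (2 <= c)%N then xc x c.-1 else 0) = Pf x k.-1.
Proof.
elim: k => [|k IH]; first by rewrite big_geq // Pf0.
rewrite big_nat_recr //= IH; case: k {IH} => [|k] /=; first by rewrite addr0.
by rewrite PfS.
Qed.

Lemma outer3 (g : R) s : \sum_(s <= a < 3) (if a == 1%N then g else 0) = if (s <= 1)%N then g else 0.
Proof.
case: s => [|[|[|s]]].
- do 3! (rewrite big_ltn; last by []).
  rewrite big_geq; last by [].
  rewrite -[(0 == 1)%N]/false -[(2 == 1)%N]/false eqxx -[(0 <= 1)%N]/true.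
  by rewrite add0r !addr0.
- do 2! (rewrite big_ltn; last by []).
  rewrite big_geq; last by [].
  rewrite -[(2 == 1)%N]/false eqxx -[(1 <= 1)%N]/true.
  by rewrite !addr0.
- rewrite big_ltn; last by [].
  rewrite big_geq; last by [].
  by rewrite -[(2 == 1)%N]/false -[(2 <= 1)%N]/false addr0.
- by rewrite big_geq.
Qed.

Lemma psumE x p : psum 2 (emb2 x) p = if (p.1 <= 1)%N then Pf x (pcol p 1).-1 else 0.
Proof.
rewrite /psum -(outer3 _ p.1); apply: eq_bigr => a _.
case: eqP => [->|ha].
  rewrite -Gsum; apply: eq_bigr => c _; rewrite /regval /emb2 /=.
  by case: (1 < c)%N.
apply: big1 => c _; rewrite /regval /emb2.
case: ifP => // /andP [h1 h2]; rewrite h2 andbT.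
by case: eqP.
Qed.

Lemma fweightE x S : fweight 2 (emb2 x) S =
  \sum_(p <- S) (if (p.1 <= 1)%N then Pf x (pcol p 1).-1 else 0).
Proof. by apply: eq_bigr => p _; rewrite psumE. Qed.

Lemma uniq_map_eq (T1 T2 : eqType) (f : T1 -> T2) s a b :
  uniq (map f s) -> a \in s -> b \in s -> f a = f b -> a = b.
Proof.
elim: s => //= y s IH /andP [hy hu]; rewrite !inE => /orP [/eqP ->|ha] /orP [/eqP ->|hb] // e.
- by move: hy; rewrite e (map_f f hb).
- by move: hy; rewrite -e (map_f f ha).
- exact: IH.
Qed.

Lemma disj_sym k S (hd : forall i j, (i < j < size S)%N -> forall a c,
   ~~ (on_path k (nth (0%N, [::]) S i) a c && on_path k (nth (0%N, [::]) S j) a c)) p q a c :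
  p \in S -> q \in S -> p != q -> on_path k p a c -> on_path k q a c -> False.
Proof.
move=> hp hq hpq h1 h2.
have ip := index_mem p S; have iq := index_mem q S.
rewrite hp in ip; rewrite hq in iq.
have hij : index p S != index q S.
  by apply: contra hpq => /eqP e; rewrite -(nth_index (0%N, [::]) hp) e nth_index.
case: (ltngtP (index p S) (index q S)) hij => // lt _.
- have := hd _ _ (introT andP (conj lt iq)) a c; by rewrite !nth_index // h1 h2.
- have := hd _ _ (introT andP (conj lt ip)) a c; by rewrite !nth_index // h1 h2.
Qed.

Definition lo (u v : nat) : nat := if (u <= 2)%N then 0%N else (u - 2)%N.
Definition hi (u v : nat) : nat := if u == 1%N then 0%N else (v - 3)%N.

Lemma path2 a s : path_ok 2 n (a, s) -> a = 1%N ->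
  exists c1 c2, s = [:: c1; c2] /\ (1 <= c1)%N /\ (c1 <= c2)%N /\ (c2 <= n - 2)%N.
Proof.
move=> /and4P [h1 h2 h3 h4] ea; rewrite /= in h1 h2 h3 h4; subst a; clear h1.
case: s h2 h3 h4 => [|c1 [|c2 [|]]] //= _.
rewrite andbT => h3 /and3P [/andP [h4 h5] /andP [h6 h7] _].
by exists c1, c2.
Qed.

Lemma path1 a s : path_ok 2 n (a, s) -> a = 2%N ->
  exists d, s = [:: d] /\ (1 <= d)%N /\ (d <= n - 2)%N.
Proof.
move=> /and4P [h1 h2 h3 h4] ea; rewrite /= in h1 h2 h3 h4; subst a; clear h1.
case: s h2 h3 h4 => [|d [|]] //= _ _.
rewrite andbT => /andP [h4 h5].
by exists d.
Qed.

Lemma fam_sound K S u v : (1 <= u)%N -> (u < v)%N -> (v <= n)%N ->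
  (forall l, lab_in K l = (l == u) || (l == v)) -> family_ok 2 n K S ->
  exists m, (lo u v <= m <= hi u v)%N /\ forall x, fweight 2 (emb2 x) S = Pf x m.
Proof.
move=> hu huv hvn hK [hall [huf hup] hf hsk hd].
have hS : uniq S := map_uniq huf.
have hpos : forall q, q \in S -> (1 <= q.1 <= 2)%N.
  by move=> q hq; have /and4P [] := allP hall q hq.
case: (eqVneq u 1%N) => [u1|u1].
  exists 0%N; split; first by rewrite /lo /hi u1.
  move=> x; rewrite fweightE Pf0; apply: big1_seq => q /andP [_ hq].
  have hq1 : q.1 != 1%N.
    apply/negP => /eqP e1.
    have /hf [_] : 1%N \in map fst S by apply/mapP; exists q.
    by rewrite hK u1 eqxx.
  move: (hpos q hq) => hq12; case: ifP => [h|_]; last by []. exfalso; move: hq1 h hq12; case: (q) => a b /=; lia.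
have h1 : (1%N \in map fst S) by apply/hf; rewrite hK; split => //; apply/negP; lia.
case/mapP: h1 => p hp e1.
case: p hp e1 => a s hp /= e1; subst a.
have [c1 [c2 [es [hc1 [hc12 hc2]]]]] := path2 (allP hall _ hp) erefl.
subst s.
have hsum : forall x, fweight 2 (emb2 x) S = Pf x c1.-1.
  move=> x; rewrite fweightE (bigD1_seq _ hp hS) /= big1_seq ?addr0 // => q /andP [hqp hq].
  have hq1 : q.1 != 1%N.
    apply/negP => /eqP e1; move/negP: hqp; apply.
    by apply/eqP; apply: (uniq_map_eq huf hq hp).
  move: (hpos q hq) => hq12; case: ifP => [h|_]; last by []. exfalso; move: hq1 h hq12; case: (q) => a b /=; lia.
have hc2K : (2 + c2 == u) || (2 + c2 == v).
  have /hsk [_] : c2 \in map pend S by apply/mapP; exists (1%N, [:: c1; c2]).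
  by rewrite hK.
exists c1.-1; split => //.
case: (eqVneq u 2%N) => [u2|u2].
  rewrite /lo /hi u2 /=; move/orP: hc2K => [/eqP|/eqP]; lia.
have h2 : (2%N \in map fst S) by apply/hf; rewrite hK; split => //; apply/negP; lia.
case/mapP: h2 => q hq e2.
case: q hq e2 => a s hq /= e2; subst a.
have [d [es [hd1 hd2]]] := path1 (allP hall _ hq) erefl.
subst s.
have hdK : (2 + d == u) || (2 + d == v).
  have /hsk [_] : d \in map pend S by apply/mapP; exists (2%N, [:: d]).
  by rewrite hK.
have hdc : (d < c1)%N.
  rewrite ltnNge; apply/negP => hle.
  apply: (disj_sym hd hp hq _ (a := 2%N) (c := c1)) => //.
  - by rewrite /on_path /pcol /= leqnn hc12.
  - by rewrite /on_path /pcol /= hle (leq_trans _ hc1).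
have u3 : (3 <= u)%N by lia.
rewrite /lo /hi (_ : (u <= 2)%N = false); last lia.
rewrite (_ : (u == 1%N) = false); last lia.
move/orP: hc2K => [/eqP|/eqP]; move/orP: hdK => [/eqP|/eqP]; lia.
Qed.

Lemma fam_complete K u v m : (1 <= u)%N -> (u < v)%N -> (v <= n)%N ->
  (forall l, lab_in K l = (l == u) || (l == v)) -> (lo u v <= m <= hi u v)%N ->
  exists S, family_ok 2 n K S /\ forall x, fweight 2 (emb2 x) S = Pf x m.
Proof.
move=> hu huv hvn hK; rewrite /lo /hi => hm.
case: (eqVneq u 1%N) => [u1|u1].
  subst u; have m0 : m = 0%N by move: hm; rewrite /=; lia.
  subst m.
  case: (eqVneq v 2%N) => [v2|v2].
    subst v; exists [::]; split; last by move=> x; rewrite fweightE big_nil Pf0.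
    split => //.
    - by move=> a; rewrite hK in_nil; split; [|case]; lia.
    - by move=> c; rewrite hK /= in_nil; split; [|case]; lia.
    - by move=> i j /=; lia.
  exists [:: (2%N, [:: (v - 2)%N])]; split; last first.
    by move=> x; rewrite fweightE big_cons big_nil /= Pf0 addr0.
  split => //.
  - by rewrite /= /path_ok /=; lia.
  - by move=> a; rewrite hK /= inE; split; [|case]; lia.
  - by move=> c; rewrite hK /= inE /pend /=; split; [|case]; lia.
  - by move=> i j /=; lia.
case: (eqVneq u 2%N) => [u2|u2].
  subst u; move: hm => /= hm.
  exists [:: (1%N, [:: m.+1; (v - 2)%N])]; split; last first.
    by move=> x; rewrite fweightE big_cons big_nil /= addr0.
  split => //.
  - by rewrite /= /path_ok /=; lia.
  - by move=> a; rewrite hK /= inE; split; [|case]; lia.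
  - by move=> c; rewrite hK /= inE /pend /=; split; [|case]; lia.
  - by move=> i j /=; lia.
have u3 : (3 <= u)%N by lia.
move: hm; rewrite (_ : (u <= 2)%N = false) ?(negbTE u1) /=; last lia.
move=> hm.
exists [:: (1%N, [:: m.+1; (v - 2)%N]); (2%N, [:: (u - 2)%N])]; split; last first.
  by move=> x; rewrite fweightE !big_cons big_nil /= !addr0.
split => //.
- by rewrite /= /path_ok /=; lia.
- by rewrite /= inE /pend /=; lia.
- by move=> a; rewrite hK /= !inE; split; [|case]; lia.
- by move=> c; rewrite hK /= !inE /pend /=; split; [|case]; lia.
- move=> i j /= hij a c; have [-> ->] : i = 0%N /\ j = 1%N by lia.
  rewrite /on_path /pcol /=.
  case: a => [|[|[|a]]] /=; lia.
Qed.

End Fam.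


Lemma lab_in_set2 n (a b : 'I_n) l : lab_in [set a; b] l = (l == a.+1) || (l == b.+1).
Proof.
apply/existsP/orP => [[i /andP [hi /eqP <-]]|].
  by rewrite in_set2 in hi; case/orP: hi => /eqP ->; [left|right].
by case => /eqP ->; [exists a; rewrite set21 eqxx | exists b; rewrite set22 eqxx].
Qed.

Lemma K_intv n (K : {set 'I_n}) : #|K| = 2%N -> exists u v, [/\ (1 <= u)%N, (u < v)%N, (v <= n)%N &
  forall l, lab_in K l = (l == u) || (l == v)].
Proof.
move=> h; have /cards2P [x [y [hxy ->]]] : #|K| == 2%N by rewrite h.
case: (ltngtP x y) => [lt|gt|eq].
- by exists x.+1, y.+1; split; [by [] | by [] | exact: ltn_ord | exact: lab_in_set2].
- exists y.+1, x.+1; split; [by [] | by [] | exact: ltn_ord |].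
  by move=> l; rewrite lab_in_set2 orbC.
- by move: hxy; rewrite (val_inj eq) eqxx.
Qed.

Lemma uv_unique u v u' v' : (u < v)%N -> (u' < v')%N ->
  (forall l, (l == u) || (l == v) = (l == u') || (l == v')) -> u = u' /\ v = v'.
Proof.
move=> h h' e.
have := e u; have := e v; have := e u'; have := e v'.
rewrite !eqxx ?orbT /=; lia.
Qed.

Lemma lo_hi u v : (1 <= u)%N -> (u < v)%N -> (lo u v <= hi u v)%N /\ (hi u v <= v - 3)%N.
Proof. by rewrite /lo /hi => h1 h2; case: ifP => ?; case: ifP => ?; lia. Qed.

Lemma lohi_of s t : lo (if s == 0%N then 2%N else s.+2) t.+3 = s /\ hi (if s == 0%N then 2%N else s.+2) t.+3 = t.
Proof. case: s => [|s]; rewrite /lo /hi /=; split; lia. Qed.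

Lemma intv_K n s t : (4 <= n)%N -> (s <= t)%N -> (t <= n - 3)%N ->
  exists K : {set 'I_n}, #|K| = 2%N /\ exists u v, [/\ (1 <= u)%N, (u < v)%N, (v <= n)%N,
  (forall l, lab_in K l = (l == u) || (l == v)) & lo u v = s /\ hi u v = t].
Proof.
move=> hn hst htn.
pose u := if s == 0%N then 2%N else s.+2.
have ha : (u.-1 < n)%N by rewrite /u; case: ifP; lia.
have hb : (t.+2 < n)%N by lia.
exists [set Ordinal ha; Ordinal hb]; split.
  rewrite cards2; congr S; apply/eqP; rewrite -(inj_eq val_inj) /= /u; case: ifP; lia.
exists u, t.+3; split.
- by rewrite /u; case: ifP.
- by rewrite /u; case: ifP; lia.
- lia.
- move=> l; rewrite lab_in_set2 /= /u; case: ifP => // h; lia.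
- exact: lohi_of.
Qed.

Local Open Scope classical_set_scope.
Section Cone.
Variable R : realType.
Variable n : nat.

Lemma SPconeE T (x : 'I_(n - 3) -> R) : SPcone T x <->
  (forall e, e \in pc_pairs T 0 -> Pf x e.1.-1 <= Pf x e.2.-1).
Proof.
rewrite /SPcone /=; split => h e he; have [h1 h2] := pairs_pos he; have := h e he.
- case: ifP => lt.
    by rewrite sum_int // ?subr_ge0 //; exact: ltnW.
  by rewrite sum_int //; [rewrite subr_le0 | lia].
- case: ifP => lt.
    by rewrite sum_int // ?subr_ge0 //; exact: ltnW.
  by rewrite sum_int //; [rewrite subr_le0 | lia].
Qed.

Lemma SP_iff T (x : 'I_(n - 3) -> R) : nint T = (n - 3).+1 -> SPcone T x <->
  (forall s m t, (s <= m)%N -> (m <= t)%N -> (t <= n - 3)%N -> Pf x (sigm T 0 s t) <= Pf x m).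
Proof.
move=> hT; rewrite SPconeE; split => h.
- move=> s m t hsm hmt htn; apply: (A_fwd h) => //; rewrite hT; lia.
- apply: (A_bwd (rel := fun a b => a <= b)) => s m t _ hsm hmt htn _.
  by apply: h => //; rewrite hT in htn; lia.
Qed.

End Cone.

Local Open Scope classical_set_scope.

Lemma gbound (R : realType) (b1 b2 b3 b4 : bool) :
  `|((b1%:R - b2%:R) - (b3%:R - b4%:R) : R)| <= 2.
Proof. by rewrite ler_norml; case: b1; case: b2; case: b3; case: b4; rewrite /=; apply/andP; split; lra. Qed.

Lemma backward (R : realType) (n : nat) (hn : (4 <= n)%N) (T : btree) :
  nleaves T = n.-1 -> F_maxcone 2 n (@emb2 R n) (@SPcone R (n - 3) T).
Proof.
move=> hT.
have hTn : nint T = (n - 3).+1 by move: hT; rewrite nleavesE; lia.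
pose x0 : 'I_(n - 3) -> R := Psi (fun m => (dep T 0 m)%:R).
have hx0 : forall k, (k <= n - 3)%N -> Pf x0 k = (dep T 0 k)%:R - (dep T 0 0)%:R.
  by move=> k hk; rewrite Pf_Psi.
pose c : R := (n - 3).+1%:R * 2.
have hc : 0 < c by rewrite /c; apply: mulr_gt0 => //; rewrite ltr0n.
pose e : R := c^-1.
have he : 0 < e by rewrite /e invr_gt0.
have hNe : (n - 3)%:R * e * 2 <= 1.
  rewrite /e mulrAC ler_pdivrMr // mul1r /c -natr1; lra.
split.
  exists x0, e; split => // y hy.
  apply/(SP_iff _ hTn) => s m t hsm hmt htn.
  have htT : (t < 0 + nint T)%N by rewrite hTn; lia.
  have hsig := sig_in (leq0n s) (leq_trans hsm hmt) htT.
  case: (eqVneq m (sigm T 0 s t)) => [->|hne]; first exact: lexx.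
  have hd := dep_strict (leq0n s) hsm hmt htT hne.
  have hd' : (dep T 0 (sigm T 0 s t))%:R + 1 <= (dep T 0 m)%:R :> R by rewrite natr1 ler_nat.
  have b1 := @Pf_ball _ _ x0 y e (sigm T 0 s t) (ltW he) hy.
  have b2 := @Pf_ball _ _ x0 y e m (ltW he) hy.
  have b1' : (sigm T 0 s t)%:R * e <= (n - 3)%:R * e by rewrite ler_wpM2r ?ler_nat //; [exact: ltW | lia].
  have b2' : m%:R * e <= (n - 3)%:R * e by rewrite ler_wpM2r ?ler_nat //; [exact: ltW | lia].
  move: b1 b2; rewrite !ler_norml !hx0; try lia.
  move=> /andP [b1 b1''] /andP [b2 b2''].
  lra.
have hch : forall K : {set 'I_n}, exists S, #|K| = 2%N -> family_ok 2 n K S /\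
    forall u v, (1 <= u)%N -> (u < v)%N -> (v <= n)%N -> (forall l, lab_in K l = (l == u) || (l == v)) ->
    forall x : 'I_(n - 3) -> R, fweight 2 (emb2 x) S = Pf x (sigm T 0 (lo u v) (hi u v)).
  move=> K; case: (eqVneq #|K| 2%N) => [h|h]; last by exists [::] => e2; rewrite e2 eqxx in h.
  have [u [v [hu huv hvn hK]]] := K_intv h.
  have [hl hh] := lo_hi hu huv.
  have htT : (hi u v < 0 + nint T)%N by rewrite hTn; lia.
  have hsig := sig_in (leq0n _) hl htT.
  have [S [hS hw]] := fam_complete R hu huv hvn hK hsig.
  exists S => _; split => // u' v' hu' huv' hvn' hK' x.
  have [eu ev] : u = u' /\ v = v'.
    by apply: uv_unique => // l; rewrite -hK hK'.
  by subst u' v'; rewrite hw.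
case: (choice hch) => sel hsel.
exists sel; split; first by move=> K hK; have [] := hsel K hK.
rewrite predeqE => x; split => hx.
- move=> K hK S hS.
  have [u [v [hu huv hvn hK']]] := K_intv hK.
  have [_ hw] := hsel K hK.
  rewrite (hw u v hu huv hvn hK' x).
  have [m [hm hmw]] := fam_sound R hu huv hvn hK' hS.
  rewrite hmw.
  have [hl hh] := lo_hi hu huv.
  move/(SP_iff _ hTn): hx => hx; apply: hx; lia.
- apply/(SP_iff _ hTn) => s m t hsm hmt htn.
  have [K [hK [u [v [hu huv hvn hK' [el eh]]]]]] := intv_K hn (leq_trans hsm hmt) htn.
  have hm : (lo u v <= m <= hi u v)%N by rewrite el eh; lia.
  have [S [hS hSw]] := fam_complete R hu huv hvn hK' hm.
  have := hx K hK S hS.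
  have [_ hw] := hsel K hK.
  by rewrite (hw u v hu huv hvn hK' x) hSw el eh.
Qed.

Local Open Scope classical_set_scope.

Lemma forward (R : realType) (n : nat) (hn : (4 <= n)%N) (C : set ('I_(n - 3) -> R)) :
  F_maxcone 2 n (@emb2 R n) C -> exists T : btree, nleaves T = n.-1 /\ C = @SPcone R (n - 3) T.
Proof.
case => [[x0 [e [he hball]]] [sel [hsel hC]]].
have strict : forall (K : {set 'I_n}) u v, (1 <= u)%N -> (u < v)%N -> (v <= n)%N ->
    (forall l, lab_in K l = (l == u) || (l == v)) -> #|K| = 2%N ->
    forall mK, (forall x : 'I_(n - 3) -> R, fweight 2 (emb2 x) (sel K) = Pf x mK) ->
    (mK <= hi u v)%N ->
    forall m, (lo u v <= m <= hi u v)%N -> m != mK -> Pf x0 mK < Pf x0 m.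
  move=> K u v hu huv hvn hK hK2 mK hmK hmKh m hm hne.
  rewrite ltNge; apply/negP => hle.
  have [hl hh] := lo_hi hu huv.
  pose d : R := e / 4.
  have hd : 0 < d by rewrite /d divr_gt0.
  pose g (k : nat) : R := (k == mK)%:R - (k == m)%:R.
  pose f' (k : nat) : R := Pf x0 k + d * g k.
  pose y := Psi (D := n - 3) f'.
  have hy : C y.
    apply: hball => j.
    have -> : y j - x0 j = d * (g j.+1 - g j).
      have := congr1 (fun F => F j) (Psi_Pf x0); rewrite /y /Psi /f' => <-.
      ring.
    rewrite normrM (ger0_norm (ltW hd)).
    have := gbound R (j.+1 == mK) (j.+1 == m) (nat_of_ord j == mK) (nat_of_ord j == m).
    rewrite /g => hb.
    have : d * `|(j.+1 == mK)%:R - (j.+1 == m)%:R - ((nat_of_ord j == mK)%:R - (nat_of_ord j == m)%:R)| <= d * 2.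
      by rewrite ler_wpM2l // ltW.
    rewrite /d; lra.
  have [S [hS hSw]] := fam_complete R hu huv hvn hK hm.
  move: hy; rewrite hC => /(_ K hK2 S hS); rewrite hmK hSw.
  rewrite !Pf_Psi; try lia.
  rewrite /f' /g !eqxx (negbTE hne) eq_sym (negbTE hne) /=.
  move: hd hle; lra.
pose T := bt (Pf x0) (n - 3).+1 0 (n - 3).+1.
have hTn : nint T = (n - 3).+1 by rewrite /T bt_nint.
have key : forall (K : {set 'I_n}) u v, (1 <= u)%N -> (u < v)%N -> (v <= n)%N ->
    (forall l, lab_in K l = (l == u) || (l == v)) -> #|K| = 2%N ->
    forall x : 'I_(n - 3) -> R, fweight 2 (emb2 x) (sel K) = Pf x (sigm T 0 (lo u v) (hi u v)).
  move=> K u v hu huv hvn hK hK2.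
  have [mK [hmK hw]] := fam_sound R hu huv hvn hK (hsel K hK2).
  have [hl hh] := lo_hi hu huv.
  have htT : (hi u v < 0 + nint T)%N by rewrite hTn; lia.
  have hsig := sig_in (leq0n _) hl htT.
  case: (eqVneq (sigm T 0 (lo u v) (hi u v)) mK) => [->|hne] //.
  have h1 := strict K u v hu huv hvn hK hK2 mK hw (proj2 (andP hmK)) _ hsig hne.
  have h2 : Pf x0 (sigm T 0 (lo u v) (hi u v)) <= Pf x0 mK.
    rewrite /T; apply: bt_min => //; try lia.
  exfalso; move: h1 h2; lra.
exists T; split; first by rewrite nleavesE hTn; lia.
rewrite hC predeqE => x; split => hx.
- apply/(SP_iff _ hTn) => s m t hsm hmt htn.
  have [K [hK [u [v [hu huv hvn hK' [el eh]]]]]] := intv_K hn (leq_trans hsm hmt) htn.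
  have hm : (lo u v <= m <= hi u v)%N by rewrite el eh; lia.
  have [S [hS hSw]] := fam_complete R hu huv hvn hK' hm.
  have := hx K hK S hS.
  by rewrite (key K u v hu huv hvn hK' hK x) hSw el eh.
- move=> K hK S hS.
  have [u [v [hu huv hvn hK']]] := K_intv hK.
  rewrite (key K u v hu huv hvn hK' hK x).
  have [m [hm hmw]] := fam_sound R hu huv hvn hK' hS.
  rewrite hmw.
  have [hl hh] := lo_hi hu huv.
  move/(SP_iff _ hTn): hx => hx; apply: hx; lia.
Qed.

Theorem mainTheorem8 (R : realType) (n : nat) (hn : (4 <= n)%N)
    (C : set ('I_(n - 3) -> R)) :
  F_maxcone 2 n (@emb2 R n) C <->
  exists T : btree, nleaves T = n.-1 /\ C = @SPcone R (n - 3) T.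
Proof.
split; first exact: forward.
by case=> T [hT ->]; exact: backward.
Qed.
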